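(* Let $E$ be a set of inequalities $t\sqsubseteq t'$ between finite partial $\Sigma$-terms in $\mathrm{FT}\,X_\omega$, let $(\Delta X)_X$ be a quasi-regular family, and let $X$ be any set. Let $F_\omega(X)$ be the free $\omega$-continuous algebra on $X$ in $\mathcal V_\omega$, and let $$R(X)=\{t^{F_\omega(X)}: t\in \Delta X\}\subseteq F_\omega(X),$$ the set of elements of $F_\omega(X)$ denoted by coterms in $\Delta X$ under the assignment $x\mapsto x$. Then: (1) $R(X)$, with the order and operations inherited from $F_\omega(X)$, is a $\Delta$-algebra belonging to $\mathcal V_r$, and it is the free $\Delta$-algebra in $\mathcal V_r$ on generators $X$: for every $\Delta$-algebra $A\in\mathcal V_r$ and every map $h:X\to A$ there is a unique morphism of $\Delta$-algebras $R(X)\to A$ extending $h$. (2) $R(X)$ is isomorphic (as a $\Delta$-algebra, by an isomorphism fixing $X$) to the completion of $F(X)$ by $\Delta$-ideals, where $F(X)$ is the free ordered algebra on $X$ in $\mathcal V$; this completion is the set of all $\Delta$-ideals of $F(X)$ ordered by inclusion, with operations $f(C_1,\dots,C_n)={\downarrow}\{f^{F(X)}(a_1,\dots,a_n): a_i\in C_i\}$ and generators $x\mapsto{\downarrow}\{x\}$.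
   Context: Fix a ranked alphabet $\Sigma$ and a countably infinite set $X_\omega$ of variables. An ordered $\Sigma$-algebra is a $\Sigma$-algebra $A$ with a partial order having a least element $\bot^A$ and monotone operations; morphisms are strict monotone maps commuting with the operations. It is $\omega$-continuous if countable directed sets have suprema and operations preserve them; morphisms of $\omega$-continuous algebras additionally preserve countable directed suprema. $\mathrm{FT}\,X$ denotes the finite partial $\Sigma$-terms over $X$ (finite trees, internal nodes labeled by symbols of $\Sigma$ of matching arity, leaves by constants or elements of $X$, some subterms possibly missing, written $\bot$) and $\mathrm{CT}\,X$ the partial coterms (finite or infinite such trees), ordered by extension; $\mathrm{CT}\,X$ is the free $\omega$-continuous algebra on $X$. Each $t\in\mathrm{FT}\,X_\omega$ induces $t^A:A^{X_\omega}\to A$ on an ordered algebra $A$, and each coterm induces a function on an $\omega$-continuous algebra. $\mathcal V$ is the class of ordered algebras $A$ with $t^A\le t'^A$ pointwise for all $(t\sqsubseteq t')\in E$; $\mathcal V_\omega$ is the class of $\omega$-continuous algebras in $\mathcal V$ (free algebras exist in both). A quasi-regular family is a family $(\Delta X)_X$ over all sets, each $\Delta X$ an ordered $\Sigma$-subalgebra of $\mathrm{CT}\,X$ containing $X$, such that every morphism $h:\mathrm{CT}\,X\to\mathrm{CT}\,Y$ of $\omega$-continuous algebras with $h(X)\subseteq\Delta Y$ satisfies $h(\Delta X)\subseteq\Delta Y$; $\Delta$ is a monad on sets ($\eta$ = one-node terms, $\mu$ = substitution/flattening, $\Delta g$ = relabeling leaves). For $t_1,t_2\in\mathrm{CT}\,X$,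 $t_1\ll t_2$ means $t_1\in\mathrm{FT}\,X$ is obtained from $t_2$ by deleting subterms. For an ordered algebra $A$ with term evaluation $\alpha:\mathrm{FT}\,A\to A$, a $\Delta$-set is a set $\{\alpha(s):s\ll t\}$ with $t\in\Delta A$, and a $\Delta$-ideal is the down-closure ${\downarrow}B=\{c:\exists b\in B,\ c\le b\}$ of a $\Delta$-set $B$. $A$ is a $\Delta$-algebra ($\Delta$-regular algebra) if every $\Delta$-set has a supremum and the operations preserve suprema of $\Delta$-sets; its structure map $\alpha:\Delta A\to A$ is $\alpha(t)=\bigvee\{\alpha(s):s\ll t\}$. A morphism of $\Delta$-algebras is a strict monotone map $h$ with $h\circ\alpha=\beta\circ\Delta h$ (equivalently, an ordered-algebra morphism preserving suprema of $\Delta$-sets). $\mathcal V_r$ is the class of $\Delta$-algebras that, as ordered algebras, belong to $\mathcal V$. *)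

(* Defs.v *)
From mathcomp Require Import all_boot.
Set Implicit Arguments. Unset Strict Implicit. Unset Printing Implicit Defensive.

Record signature := Signature { sym :> Type; ar : sym -> nat }.

Definition is_lub {T : Type} (le : T -> T -> Prop) (P : T -> Prop) (a : T) : Prop :=
  (forall b, P b -> le b a) /\ (forall c, (forall b, P b -> le b c) -> le a c).

Definition is_lub_in {T : Type} (dom : T -> Prop) (le : T -> T -> Prop)
  (P : T -> Prop) (a : T) : Prop :=
  dom a /\ (forall b, P b -> le b a) /\
  (forall c, dom c -> (forall b, P b -> le b c) -> le a c).

Definition countable_set {T : Type} (P : T -> Prop) : Prop :=
  exists e : nat -> T, forall x, P x -> exists n, e n = x.

Definition directed {T : Type} (le : T -> T -> Prop) (P : T -> Prop) : Prop :=
  (exists x, P x) /\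
  (forall x y, P x -> P y -> exists z, P z /\ le x z /\ le y z).

Section Sig.
Variable S : signature.

(** Finite partial terms FT X (TBot = missing subterm) *)
Inductive term (X : Type) : Type :=
| TBot
| TVar (x : X)
| TOp (f : sym S) (ts : 'I_(ar f) -> term X).

(** Partial coterms CT X: (well-formed) labellings of positions
    (paths of child indices from the root); None = no node. *)
Definition tree (X : Type) : Type := list nat -> option (X + sym S).

Definition wf_tree (X : Type) (t : tree X) : Prop :=
  forall p i, t (rcons p i) <> None ->
    exists f : sym S, t p = Some (inr f) /\ i < ar f.

Definition tree_le (X : Type) (t1 t2 : tree X) : Prop :=
  forall p, t1 p <> None -> t1 p = t2 p.

Definition tree_bot (X : Type) : tree X := fun _ => None.

Definition tree_var (X : Type) (x : X) : tree X :=
  fun p => match p with [::] => Some (inl x) | _ => None end.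

Definition tree_op (X : Type) (f : sym S) (ts : 'I_(ar f) -> tree X) : tree X :=
  fun p => match p with
           | [::] => Some (inr f)
           | i :: p' => match (insub i : option 'I_(ar f)) with
                        | Some j => ts j p'
                        | None => None
                        end
           end.

Fixpoint term_tree (X : Type) (t : term X) : tree X :=
  match t with
  | TBot => tree_bot X
  | TVar x => tree_var x
  | TOp f ts => tree_op (fun i => term_tree (ts i))
  end.

(* s << t : the finite term s is obtained from t by deleting subterms *)
Definition finite_below (X : Type) (s : term X) (t : tree X) : Prop :=
  tree_le (term_tree s) t.

Unset Implicit Arguments.
Record ordAlg := OrdAlg {
  car :> Type;
  ale : car -> car -> Prop;
  abot : car;
  aop : forall f : sym S, ('I_(ar f) -> car) -> car;
  ale_refl : forall a, ale a a;
  ale_trans : forall a b c, ale a b -> ale b c -> ale a c;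
  ale_antisym : forall a b, ale a b -> ale b a -> a = b;
  abot_least : forall a, ale abot a;
  aop_mono : forall f u v, (forall i, ale (u i) (v i)) -> ale (aop f u) (aop f v)
}.

Set Implicit Arguments.
Arguments ale {A} : rename.
Arguments abot A : rename.
Arguments aop {A} f u : rename.

Fixpoint eval (A : ordAlg) (X : Type) (v : X -> A) (t : term X) : A :=
  match t with
  | TBot => abot A
  | TVar x => v x
  | TOp f ts => aop f (fun i => eval v (ts i))
  end.

Definition ord_morph (A B : ordAlg) (h : A -> B) : Prop :=
  h (abot A) = abot B /\
  (forall a b, ale a b -> ale (h a) (h b)) /\
  (forall f u, h (aop f u) = aop f (fun i => h (u i))).

Definition omega_cont (A : ordAlg) : Prop :=
  (forall D : A -> Prop, countable_set D -> directed (@ale A) D ->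
     exists a, is_lub (@ale A) D a) /\
  (forall (f : sym S) (D : ('I_(ar f) -> A) -> Prop) (s : 'I_(ar f) -> A),
     countable_set D -> directed (fun u v => forall i, ale (u i) (v i)) D ->
     (forall i, is_lub (@ale A) (fun a => exists u, D u /\ a = u i) (s i)) ->
     is_lub (@ale A) (fun a => exists u, D u /\ a = aop f u) (aop f s)).

Definition omega_morph (A B : ordAlg) (h : A -> B) : Prop :=
  ord_morph h /\
  (forall D : A -> Prop, countable_set D -> directed (@ale A) D ->
     forall a, is_lub (@ale A) D a ->
       is_lub (@ale B) (fun b => exists a', D a' /\ b = h a') (h a)).

Definition ct_eval (A : ordAlg) (X : Type) (v : X -> A) (t : tree X) (a : A) : Prop :=
  is_lub (@ale A) (fun b => exists s, finite_below s t /\ b = eval v s) a.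

(** Varieties given by inequalities over X_omega = nat *)
Definition ineqs := term nat -> term nat -> Prop.

Definition sat (E : ineqs) (A : ordAlg) : Prop :=
  forall t t', E t t' -> forall v : nat -> A, ale (eval v t) (eval v t').

Definition free_ord (E : ineqs) (X : Type) (F : ordAlg) (eta : X -> F) : Prop :=
  sat E F /\
  forall (B : ordAlg), sat E B -> forall h : X -> B,
    exists g : F -> B, ord_morph g /\ (forall x, g (eta x) = h x) /\
      (forall g' : F -> B, ord_morph g' -> (forall x, g' (eta x) = h x) ->
         forall a, g' a = g a).

Definition free_omega (E : ineqs) (X : Type) (F : ordAlg) (eta : X -> F) : Prop :=
  omega_cont F /\ sat E F /\
  forall (B : ordAlg), omega_cont B -> sat E B -> forall h : X -> B,
    exists g : F -> B, omega_morph g /\ (forall x, g (eta x) = h x) /\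
      (forall g' : F -> B, omega_morph g' -> (forall x, g' (eta x) = h x) ->
         forall a, g' a = g a).

Definition ct_omega_morph (X Y : Type) (h : tree X -> tree Y) : Prop :=
  (forall t, wf_tree t -> wf_tree (h t)) /\
  h (tree_bot X) = tree_bot Y /\
  (forall t t', wf_tree t -> wf_tree t' -> tree_le t t' -> tree_le (h t) (h t')) /\
  (forall f (ts : 'I_(ar f) -> tree X), (forall i, wf_tree (ts i)) ->
     h (tree_op ts) = tree_op (fun i => h (ts i))) /\
  (forall D : tree X -> Prop, (forall t, D t -> wf_tree t) ->
     countable_set D -> directed (@tree_le X) D ->
     forall t, is_lub_in (@wf_tree X) (@tree_le X) D t ->
       is_lub_in (@wf_tree Y) (@tree_le Y) (fun u => exists t', D t' /\ u = h t') (h t)).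

Definition tfamily := forall X : Type, tree X -> Prop.

Definition quasi_regular (Delta : tfamily) : Prop :=
  (forall X t, Delta X t -> wf_tree t) /\
  (forall X, Delta X (tree_bot X)) /\
  (forall X (x : X), Delta X (tree_var x)) /\
  (forall X f (ts : 'I_(ar f) -> tree X), (forall i, Delta X (ts i)) ->
     Delta X (tree_op ts)) /\
  (forall X Y (h : tree X -> tree Y), ct_omega_morph h ->
     (forall x, Delta Y (h (tree_var x))) ->
     forall t, Delta X t -> Delta Y (h t)).

Definition delta_set (A : ordAlg) (t : tree A) (a : A) : Prop :=
  exists s, finite_below s t /\ a = eval (fun b : A => b) s.

Definition delta_ideal (Delta : tfamily) (A : ordAlg) (C : A -> Prop) : Prop :=
  exists t, Delta A t /\
    forall c, C c <-> exists b, delta_set t b /\ ale c b.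

Definition delta_alg (Delta : tfamily) (A : ordAlg) : Prop :=
  (forall t, Delta A t -> exists a, is_lub (@ale A) (delta_set t) a) /\
  (forall f (ts : 'I_(ar f) -> tree A) (s : 'I_(ar f) -> A),
     (forall i, Delta A (ts i)) ->
     (forall i, is_lub (@ale A) (delta_set (ts i)) (s i)) ->
     is_lub (@ale A)
       (fun a => exists u, (forall i, delta_set (ts i) (u i)) /\ a = aop f u)
       (aop f s)).

Definition delta_morph (Delta : tfamily) (A B : ordAlg) (h : A -> B) : Prop :=
  ord_morph h /\
  (forall t, Delta A t -> forall a, is_lub (@ale A) (delta_set t) a ->
     is_lub (@ale B) (fun b => exists a', delta_set t a' /\ b = h a') (h a)).

End Sig.

Arguments ale {S A} : rename.
Arguments abot {S} A : rename.
Arguments aop {S A} f u : rename.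

(* Main.v *)
Require Import Defs.
From mathcomp Require Import all_boot.
From Stdlib Require Import ClassicalEpsilon FunctionalExtensionality PropExtensionality ProofIrrelevance Classical.
Set Implicit Arguments. Unset Strict Implicit. Unset Printing Implicit Defensive.


Section Gen.
Variable S : signature.
Implicit Types (A B : ordAlg S).

Definition sub (Y : Type) (t : tree S Y) (i : nat) : tree S Y := fun p => t (i :: p).

Lemma tle_refl Y (t : tree S Y) : tree_le t t.
Proof. by move=> p. Qed.

Lemma tle_trans Y (t1 t2 t3 : tree S Y) : tree_le t1 t2 -> tree_le t2 t3 -> tree_le t1 t3.
Proof. move=> h1 h2 p hp. rewrite h1 //. apply: h2. by rewrite -h1. Qed.

Lemma sub_tree_op Y f (ts : 'I_(ar f) -> tree S Y) (i : 'I_(ar f)) :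
  sub (tree_op ts) i = ts i.
Proof. apply: functional_extensionality => p. by rewrite /sub /= valK. Qed.

Lemma fb_bot Y (t : tree S Y) : finite_below (TBot S Y) t.
Proof. by move=> p. Qed.

Lemma fb_var Y (x : Y) (t : tree S Y) :
  finite_below (TVar S x) t <-> t [::] = Some (inl x).
Proof.
split.
- move=> h. by rewrite -h.
- move=> h [|i p] //=; by rewrite h.
Qed.

Lemma fb_op Y f (ss : 'I_(ar f) -> term S Y) (t : tree S Y) :
  finite_below (TOp ss) t <->
  t [::] = Some (inr f) /\ forall i : 'I_(ar f), finite_below (ss i) (sub t i).
Proof.
split.
- move=> h. split; first by rewrite -h.
  move=> i p hp. rewrite /sub -h /= ?valK //.
- move=> [h1 h2] [|k p] /=; first by rewrite h1.
  case: insubP => [j _ <-|] //. move=> hp. exact: h2.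
Qed.

Lemma eval_mono_fb A Y (v : Y -> A) (s1 s2 : term S Y) :
  finite_below s1 (term_tree s2) -> ale (eval v s1) (eval v s2).
Proof.
elim: s1 s2 => [|x|f ss IH] s2 /=.
- move=> _; exact: abot_least.
- move/fb_var. case: s2 => [|y|g ts] /= h; try discriminate. case: h => ->. exact: ale_refl.
- move/fb_op => [h1 h2]. case: s2 h1 h2 => //= g ts [] Eg. subst g.
  move=> h2. apply: aop_mono => i. apply: IH. have := h2 i. by rewrite /= sub_tree_op.
Qed.

Lemma fb_trans Y (s : term S Y) (t1 t2 : tree S Y) :
  finite_below s t1 -> tree_le t1 t2 -> finite_below s t2.
Proof. exact: tle_trans. Qed.

Fixpoint trunc Y (k : nat) (t : tree S Y) : term S Y :=
  match k with
  | 0 => TBot S Y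
  | k'.+1 => match t [::] with
             | Some (inl y) => TVar S y
             | Some (inr f) => TOp (fun i : 'I_(ar f) => trunc k' (sub t i))
             | None => TBot S Y
             end
  end.

Lemma trunc_fb Y k (t : tree S Y) : finite_below (trunc k t) t.
Proof.
elim: k t => [|k IH] t /=; first exact: fb_bot.
case E: (t [::]) => [[y|f]|]; last exact: fb_bot.
- by apply/fb_var.
- apply/fb_op; split; first by []. move=> i. exact: IH.
Qed.

Lemma trunc_mono Y k k' (t : tree S Y) : k <= k' ->
  finite_below (trunc k t) (term_tree (trunc k' t)).
Proof.
elim: k k' t => [|k IH] [|k'] t //= hk; try exact: fb_bot.
case E: (t [::]) => [[y|f]|]; last exact: fb_bot.
- by apply/fb_var.
- apply/fb_op; split; first by []. move=> i. rewrite sub_tree_op. exact: IH.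
Qed.

Lemma list_bound (T : Type) (l : seq T) (Q : T -> nat -> Prop) :
  (forall x k k', Q x k -> k <= k' -> Q x k') ->
  (forall x, List.In x l -> exists k, Q x k) ->
  exists K, forall x, List.In x l -> Q x K.
Proof.
move=> Hup. elim: l => [|x l IH] H; first by exists 0.
have [k1 h1] := H x (or_introl erefl).
have [k2 h2] : exists K, forall y, List.In y l -> Q y K.
  apply: IH => y hy. apply: H. by right.
exists (maxn k1 k2) => y [<-|hy].
- apply: Hup h1 _. exact: leq_maxl.
- apply: Hup (h2 _ hy) _. exact: leq_maxr.
Qed.

Lemma in_In (T : eqType) (x : T) s : x \in s -> List.In x s.
Proof. elim: s => //= y s IH. rewrite in_cons => /orP [/eqP->|/IH]; [left|right] => //. Qed.

Lemma ord_in n (i : 'I_n) : List.In i (enum 'I_n).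
Proof. apply: in_In. by rewrite mem_enum. Qed.

Lemma fin_bound n (Q : 'I_n -> nat -> Prop) :
  (forall x k k', Q x k -> k <= k' -> Q x k') ->
  (forall x, exists k, Q x k) -> exists K, forall x, Q x K.
Proof.
move=> Hup H. have [K HK] := @list_bound _ (enum 'I_n) Q Hup (fun x _ => H x).
exists K => x. apply: HK. exact: ord_in.
Qed.

Lemma fb_trunc Y (s : term S Y) (t : tree S Y) : finite_below s t ->
  exists k, forall k', k <= k' -> finite_below s (term_tree (trunc k' t)).
Proof.
elim: s t => [|x|f ss IH] t.
- move=> _; exists 0 => *; exact: fb_bot.
- move/fb_var => h. exists 1 => [[|k']] //= _. rewrite h. by apply/fb_var.
- move/fb_op => [h1 h2].
  pose Q := fun i k => forall k', k <= k' -> finite_below (ss i) (term_tree (trunc k' (sub t i))).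
  have Hup : forall x k k', Q x k -> k <= k' -> Q x k'.
    by move=> x k k' hk hkk' k'' hk''; apply: hk; apply: leq_trans hk''.
  have [K HK] := @fin_bound _ Q Hup (fun i => IH i _ (h2 i)).
  exists K.+1 => [[|k']] //= hk. rewrite h1. apply/fb_op; split; first by []. move=> i.
  rewrite sub_tree_op. exact: HK.
Qed.

Definition dset A Y (v : Y -> A) (t : tree S Y) (a : A) : Prop :=
  exists s, finite_below s t /\ a = eval v s.

Lemma lub_unique A (P : A -> Prop) a b : is_lub ale P a -> is_lub ale P b -> a = b.
Proof. move=> [h1 h2] [h3 h4]. apply: ale_antisym; [apply: h2|apply: h4] => //. Qed.

Lemma is_lub_ext A (P Q : A -> Prop) a : (forall b, P b <-> Q b) -> is_lub ale P a -> is_lub ale Q a.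
Proof. move=> H [h1 h2]; split => [b /H|c hc]; [exact: h1|apply: h2 => b /H; exact: hc]. Qed.

Lemma lub_cofinal A (P Q : A -> Prop) a :
  (forall b, P b -> exists b', Q b' /\ ale b b') ->
  (forall b, Q b -> exists b', P b' /\ ale b b') ->
  is_lub ale P a -> is_lub ale Q a.
Proof.
move=> H1 H2 [h1 h2]; split.
- move=> b /H2 [b' [hb' hbb']]. apply: ale_trans hbb' _. exact: h1.
- move=> c hc. apply: h2 => b /H1 [b' [hb' hbb']]. apply: ale_trans hbb' _. exact: hc.
Qed.

Lemma lub_sameub A (P Q : A -> Prop) a :
  (forall c, (forall b, P b -> ale b c) -> (forall b, Q b -> ale b c)) ->
  (forall c, (forall b, Q b -> ale b c) -> (forall b, P b -> ale b c)) ->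
  is_lub ale P a -> is_lub ale Q a.
Proof.
move=> H1 H2 [h1 h2]; split.
- exact: H1.
- move=> c hc. apply: h2. exact: H2.
Qed.

Definition chain_set A Y (v : Y -> A) (t : tree S Y) (b : A) : Prop :=
  exists k, b = eval v (trunc k t).

Lemma dset_chain A Y (v : Y -> A) t a :
  is_lub ale (dset v t) a <-> is_lub ale (chain_set v t) a.
Proof.
split; apply: lub_cofinal.
- move=> b [s [hs ->]]. have [k hk] := fb_trunc hs.
  exists (eval v (trunc k t)); split; first by exists k.
  apply: eval_mono_fb. exact: hk.
- move=> b [k ->]. exists (eval v (trunc k t)); split; last exact: ale_refl.
  exists (trunc k t); split => //. exact: trunc_fb.
- move=> b [k ->]. exists (eval v (trunc k t)); split; last exact: ale_refl.
  exists (trunc k t); split => //. exact: trunc_fb.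
- move=> b [s [hs ->]]. have [k hk] := fb_trunc hs.
  exists (eval v (trunc k t)); split; first by exists k.
  apply: eval_mono_fb. exact: hk.
Qed.

Lemma chain_countable A Y (v : Y -> A) t : countable_set (chain_set v t).
Proof. exists (fun k => eval v (trunc k t)) => x [k ->]. by exists k. Qed.

Lemma chain_directed A Y (v : Y -> A) t : directed ale (chain_set v t).
Proof.
split; first by exists (eval v (trunc 0 t)); exists 0.
move=> x y [k ->] [k' ->]. exists (eval v (trunc (maxn k k') t)); split; first by eexists.
split; apply: eval_mono_fb; apply: trunc_mono; [exact: leq_maxl|exact: leq_maxr].
Qed.

Lemma omega_lub A Y (v : Y -> A) t : omega_cont A -> exists a, is_lub ale (dset v t) a.
Proof.
move=> [H _]. have [a ha] := H _ (chain_countable v t) (chain_directed v t).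
exists a. by apply/dset_chain.
Qed.

Definition opset A f (P : 'I_(ar f) -> A -> Prop) (a : A) : Prop :=
  exists u, (forall i, P i (u i)) /\ a = aop f u.

Lemma fin_choice (T : Type) n (Q : 'I_n -> T -> Prop) :
  (forall i, exists x, Q i x) -> exists u : 'I_n -> T, forall i, Q i (u i).
Proof.
move=> H. exists (fun i => proj1_sig (constructive_indefinite_description _ (H i))).
move=> i. exact: proj2_sig.
Qed.

Lemma dset_op A Y (v : Y -> A) f (ts : 'I_(ar f) -> tree S Y) a :
  dset v (tree_op ts) a <-> a = abot A \/ opset (fun i => dset v (ts i)) a.
Proof.
split.
- move=> [s [hs ->]]. case: s hs => [|x|g ss] hs; [by left| |].
  + by move/fb_var: hs.
  + move/fb_op: hs => [[Eg] h]. subst g. right. exists (fun i => eval v (ss i)); split => //.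
    move=> i. exists (ss i); split => //. have := h i. by rewrite sub_tree_op.
- move=> [->|[u [hu ->]]]; first by exists (TBot S Y); split; [exact: fb_bot|].
  have [ss hss] := @fin_choice _ _ (fun i s => finite_below s (ts i) /\ u i = eval v s) hu.
  exists (TOp ss); split.
  + apply/fb_op; split; first by []. move=> i. rewrite sub_tree_op. exact: (proj1 (hss i)).
  + congr aop. apply: functional_extensionality => i. exact: (proj2 (hss i)).
Qed.

Lemma lub_op A Y (v : Y -> A) f (ts : 'I_(ar f) -> tree S Y) a :
  is_lub ale (dset v (tree_op ts)) a <-> is_lub ale (opset (fun i => dset v (ts i))) a.
Proof.
split; apply: lub_sameub.
- move=> c hc b hb. apply: hc. apply/dset_op. by right.
- move=> c hc b /dset_op [->|hb]; [exact: abot_least|exact: hc].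
- move=> c hc b /dset_op [->|hb]; [exact: abot_least|exact: hc].
- move=> c hc b hb. apply: hc. apply/dset_op. by right.
Qed.

Lemma dset_bot A Y (v : Y -> A) b : dset v (tree_bot S Y) b <-> b = abot A.
Proof.
split; last by move->; exists (TBot S Y); split; [exact: fb_bot|].
move=> [[|x|g ss] [hs ->]] //.
- by move/fb_var: hs.
- by move/fb_op: hs => [].
Qed.

Lemma lub_bot A Y (v : Y -> A) : is_lub ale (dset v (tree_bot S Y)) (abot A).
Proof.
split; first by move=> b /dset_bot ->; exact: ale_refl.
move=> c _; exact: abot_least.
Qed.

Lemma dset_var A Y (v : Y -> A) y b : dset v (tree_var S y) b <-> b = abot A \/ b = v y.
Proof.
split.
- move=> [[|x|g ss] [hs ->]]; [by left| |].
  + move/fb_var: hs => [->]. by right.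
  + by move/fb_op: hs => [].
- move=> [->|->]; first by exists (TBot S Y); split; [exact: fb_bot|].
  exists (TVar S y); split; [by apply/fb_var|by []].
Qed.

Lemma lub_var A Y (v : Y -> A) y : is_lub ale (dset v (tree_var S y)) (v y).
Proof.
split; first by move=> b /dset_var [->|->]; [exact: abot_least|exact: ale_refl].
move=> c hc. apply: hc. apply/dset_var. by right.
Qed.

Lemma opsup_omega A Y (v : Y -> A) f (ts : 'I_(ar f) -> tree S Y) s :
  omega_cont A -> (forall i, is_lub ale (dset v (ts i)) (s i)) ->
  is_lub ale (opset (fun i => dset v (ts i))) (aop f s).
Proof.
move=> [_ H] hs.
pose D := fun u : 'I_(ar f) -> A => exists k, u = fun i => eval v (trunc k (ts i)).
have cD : countable_set D.
  exists (fun k i => eval v (trunc k (ts i))) => u [k ->]. by exists k.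
have dD : directed (fun u v => forall i, ale (u i) (v i)) D.
  split; first by exists (fun i => eval v (trunc 0 (ts i))); exists 0.
  move=> x y [k ->] [k' ->]. exists (fun i => eval v (trunc (maxn k k') (ts i))).
  split; first by eexists.
  split => i; apply: eval_mono_fb; apply: trunc_mono; [exact: leq_maxl|exact: leq_maxr].
have hproj : forall i, is_lub ale (fun a => exists u, D u /\ a = u i) (s i).
  move=> i. apply: is_lub_ext (proj1 (dset_chain _ _ _) (hs i)).
  move=> b; split.
  - move=> [k ->]. exists (fun i => eval v (trunc k (ts i))); split => //; by exists k.
  - move=> [u [[k ->] ->]]. by exists k.
have := H f D s cD dD hproj.
apply: lub_cofinal.
- move=> b [u [[k ->] ->]]. exists (aop f (fun i => eval v (trunc k (ts i)))). split; last exact: ale_refl.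
  exists (fun i => eval v (trunc k (ts i))); split => // i.
  exists (trunc k (ts i)); split => //. exact: trunc_fb.
- move=> b [u [hu ->]].
  have [ss hss] := @fin_choice _ _ (fun i s => finite_below s (ts i) /\ u i = eval v s) hu.
  pose Q := fun i k => finite_below (ss i) (term_tree (trunc k (ts i))).
  have Hup : forall x k k', Q x k -> k <= k' -> Q x k'.
    move=> i k k' h hk. rewrite /Q in h *. apply: fb_trans h _. exact: trunc_mono.
  have H0 : forall i, exists k, Q i k.
    move=> i. have [k hk] := fb_trunc (proj1 (hss i)). exists k. exact: hk.
  have [K HK] := @fin_bound _ Q Hup H0.
  exists (aop f (fun i => eval v (trunc K (ts i)))); split.
  + exists (fun i => eval v (trunc K (ts i))); split => //. by exists K.
  + apply: aop_mono => i. rewrite (proj2 (hss i)). apply: eval_mono_fb. exact: HK.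
Qed.

End Gen.


Section Subst.
Variable S : signature.
Implicit Types (A B : ordAlg S).

Fixpoint stree Y Z (sg : Y -> tree S Z) (t : tree S Y) (p : seq nat) {struct p}
  : option (Z + sym S) :=
  match t [::] with
  | Some (inl y) => sg y p
  | Some (inr f) => match p with
                    | [::] => Some (inr f)
                    | i :: p' => stree sg (sub t i) p'
                    end
  | None => None
  end.

Lemma stree_leaf Y Z (sg : Y -> tree S Z) t y : t [::] = Some (inl y) -> stree sg t = sg y.
Proof. move=> h. apply: functional_extensionality => [[|i p]] /=; by rewrite h. Qed.

Lemma stree_none Y Z (sg : Y -> tree S Z) t : t [::] = None -> stree sg t = tree_bot S Z.
Proof. move=> h. apply: functional_extensionality => [[|i p]] /=; by rewrite h. Qed.

Lemma stree_root Y Z (sg : Y -> tree S Z) t f : t [::] = Some (inr f) -> stree sg t [::] = Some (inr f).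
Proof. move=> h /=. by rewrite h. Qed.

Lemma stree_sub Y Z (sg : Y -> tree S Z) t f i : t [::] = Some (inr f) ->
  sub (stree sg t) i = stree sg (sub t i).
Proof. move=> h. apply: functional_extensionality => p. by rewrite /sub /= h. Qed.

Lemma stree_var Y Z (sg : Y -> tree S Z) y : stree sg (tree_var S y) = sg y.
Proof. exact: stree_leaf. Qed.

Lemma stree_bot Y Z (sg : Y -> tree S Z) : stree sg (tree_bot S Y) = tree_bot S Z.
Proof. exact: stree_none. Qed.

Lemma stree_op Y Z (sg : Y -> tree S Z) f (ts : 'I_(ar f) -> tree S Y) :
  stree sg (tree_op ts) = tree_op (fun i => stree sg (ts i)).
Proof.
apply: functional_extensionality => [[|k p]] //=.
case: insubP => [j _ Ej|Nk].
- congr stree. apply: functional_extensionality => q. by rewrite /sub /= -Ej valK.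
- rewrite (_ : sub _ _ = tree_bot S Y); first by case: p.
  apply: functional_extensionality => q. by rewrite /sub /= insubN.
Qed.

Lemma stree_mono Y Z (sg : Y -> tree S Z) t t' : tree_le t t' -> tree_le (stree sg t) (stree sg t').
Proof.
move=> h p. elim: p t t' h => [|i p IH] t t' h /=.
- case E: (t [::]) => [[y|f]|] //; rewrite -h ?E // => _; by rewrite E.
- case E: (t [::]) => [[y|f]|] //; rewrite -h ?E // => hp; rewrite ?E //.
  apply: IH hp. move=> q hq. exact: h.
Qed.

Lemma wf_sub Y (t : tree S Y) i : wf_tree t -> wf_tree (sub t i).
Proof. move=> h p j. exact: (h (i :: p) j). Qed.

Lemma stree_wf Y Z (sg : Y -> tree S Z) t : (forall y, wf_tree (sg y)) -> wf_tree t ->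
  wf_tree (stree sg t).
Proof.
move=> hsg ht p. elim: p t ht => [|k p IH] t ht i /=.
- case E: (t [::]) => [[y|f]|] //.
  + move=> h. have [g [Eg hi]] := hsg y [::] i h. by exists g.
  + move=> h. have : t [:: i] <> None.
      move: h. rewrite /sub /=. by case: (t [:: i]).
    move/(ht [::] i) => [g [Eg hi]]. exists f; split => //. by move: Eg; rewrite E => [[->]].
- case E: (t [::]) => [[y|f]|] //.
  + exact: (hsg y (k :: p) i).
  + move=> h. have [g [Eg hi]] := IH (sub t k) (wf_sub (i:=k) ht) i h. by exists g.
Qed.

Fixpoint preb (p q : seq nat) : bool :=
  match p, q with
  | [::], _ => true
  | i :: p', j :: q' => (i == j) && preb p' q'
  | _ :: _, [::] => false
  end.

Lemma preb_refl p : preb p p.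
Proof. by elim: p => //= i p ->; rewrite eqxx. Qed.

Lemma preb_rcons p q i : preb p (rcons q i) = (p == rcons q i) || preb p q.
Proof.
elim: p q => [|j p IH] [|k q] //=.
- by case: p {IH} => [|x p] /=; rewrite eqseq_cons ?andbT ?andbF ?orbF.
- rewrite IH eqseq_cons. by case: (j == k).
Qed.

Lemma wf_prefix Y (d : tree S Y) q p : wf_tree d -> d q <> None -> preb p q -> d p <> None.
Proof.
move=> hd. elim/last_ind: q p => [|q i IH] p.
- by case: p.
- move=> hq. rewrite preb_rcons => /orP [/eqP->//|hp]. apply: IH hp.
  have [g [-> _]] := hd q i hq. by [].
Qed.

Lemma stree_agree Y Z (sg : Y -> tree S Z) p t d :
  (forall q, preb q p -> t q <> None -> d q = t q) ->
  stree sg t p <> None -> stree sg d p = stree sg t p.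
Proof.
elim: p t d => [|i p IH] t d H /=.
- case E: (t [::]) => [[y|f]|] // _; by rewrite H // E.
- case E: (t [::]) => [[y|f]|] // hp; rewrite H ?E //.
  apply: IH hp => q hq. apply: (H (i :: q)). by rewrite /= eqxx.
Qed.

Lemma lub_point Y (D : tree S Y -> Prop) t p :
  (forall d, D d -> wf_tree d) -> is_lub_in (@wf_tree S Y) (@tree_le S Y) D t ->
  t p <> None -> exists d, D d /\ d p = t p.
Proof.
move=> hD [wt [ub lst]] hp. apply: NNPP => Hn.
pose t' := fun q => if preb p q then None else t q.
have wt' : wf_tree t'.
  move=> q i. rewrite /t' preb_rcons. case: (preb p q) => /=; first by rewrite orbT.
  case: (p == rcons q i) => //= h. have [g [Eg hi]] := wt q i h. by exists g.
have ub' : forall d, D d -> tree_le d t'.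
  move=> d hd q hq. rewrite /t'. case E: (preb p q).
  - exfalso. apply: Hn. exists d; split => //. apply: ub => //.
    exact: (wf_prefix (hD d hd) hq E).
  - exact: ub.
have := lst t' wt' ub' p hp. by rewrite /t' preb_refl.
Qed.

Lemma exists_agree Y (D : tree S Y -> Prop) t p :
  (forall d, D d -> wf_tree d) -> directed (@tree_le S Y) D ->
  is_lub_in (@wf_tree S Y) (@tree_le S Y) D t ->
  exists d, D d /\ forall q, preb q p -> t q <> None -> d q = t q.
Proof.
move=> hD [[d0 hd0] dir] hl.
have up : forall d d' q, tree_le d d' -> (t q <> None -> d q = t q) -> (t q <> None -> d' q = t q).
  move=> d d' q hdd h hq. rewrite -hdd; first exact: h. by rewrite h.
elim/last_ind: p => [|p i [d [hd H]]].
- case E: (t [::]) => [a|].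
  + have hE : t [::] <> None by rewrite E.
    have [d [hd Ed]] := lub_point hD hl hE.
    exists d; split; first by []. move=> q. case: q => // _.
  + exists d0; split; first by []. move=> q. case: q => //= _.
- case E: (t (rcons p i)) => [a|].
  + have hE : t (rcons p i) <> None by rewrite E.
    have [d' [hd' Ed']] := lub_point hD hl hE.
    have [d'' [hd'' [h1 h2]]] := dir d d' hd hd'.
    exists d''; split; first by []. move=> q. rewrite preb_rcons => /orP [/eqP->|hq].
    * apply: up h2 _ => _. exact: Ed'.
    * apply: up h1 _. exact: H.
  + exists d; split; first by []. move=> q. rewrite preb_rcons => /orP [/eqP->|hq]; first by rewrite E.
    exact: H.
Qed.

Lemma stree_sup Y Z (sg : Y -> tree S Z) (D : tree S Y -> Prop) t :
  (forall y, wf_tree (sg y)) ->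
  (forall d, D d -> wf_tree d) -> directed (@tree_le S Y) D ->
  is_lub_in (@wf_tree S Y) (@tree_le S Y) D t ->
  is_lub_in (@wf_tree S Z) (@tree_le S Z) (fun u => exists t', D t' /\ u = stree sg t') (stree sg t).
Proof.
move=> hsg hD dir hl. have [wt [ub lst]] := hl. split; last split.
- exact: stree_wf.
- move=> u [t' [ht' ->]]. apply: stree_mono. exact: ub.
- move=> c wc hc p hp. have [d [hd H]] := exists_agree p hD dir hl.
  rewrite -(stree_agree H hp). apply: (hc (stree sg d)); first by exists d.
  by rewrite (stree_agree H hp).
Qed.

Lemma stree_morph Y Z (sg : Y -> tree S Z) : (forall y, wf_tree (sg y)) ->
  ct_omega_morph (stree sg).
Proof.
move=> hsg. split; last split; last split; last split.
- move=> t; exact: stree_wf.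
- exact: stree_bot.
- move=> t t' _ _; exact: stree_mono.
- move=> f ts _; exact: stree_op.
- move=> D hD _ dir t hl. exact: stree_sup.
Qed.

Lemma delta_stree (Delta : tfamily S) Y Z (sg : Y -> tree S Z) t :
  quasi_regular Delta -> (forall y, Delta Z (sg y)) -> Delta Y t -> Delta Z (stree sg t).
Proof.
move=> [hw [_ [_ [_ hq]]]] hsg ht. apply: hq ht.
- apply: stree_morph => y. exact: hw.
- move=> x. by rewrite stree_var.
Qed.

Lemma delta_term (Delta : tfamily S) Y (s : term S Y) : quasi_regular Delta -> Delta Y (term_tree s).
Proof.
move=> [_ [hb [hv [ho _]]]]. elim: s => [|x|f ss IH] /=; [exact: hb|exact: hv|].
apply: ho. exact: IH.
Qed.

Fixpoint sterm Y Z (rho : Y -> term S Z) (s : term S Y) : term S Z :=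
  match s with
  | TBot => TBot S Z
  | TVar y => rho y
  | TOp f ss => TOp (fun i => sterm rho (ss i))
  end.

Lemma eval_ext A Y (v v' : Y -> A) s : (forall y, v y = v' y) -> eval v s = eval v' s.
Proof.
move=> h. elim: s => [|x|f ss IH] //=. congr aop. apply: functional_extensionality => i. exact: IH.
Qed.

Lemma eval_sterm A Y Z (v : Z -> A) (rho : Y -> term S Z) s :
  eval v (sterm rho s) = eval (fun y => eval v (rho y)) s.
Proof.
elim: s => [|x|f ss IH] //=. congr aop. apply: functional_extensionality => i. exact: IH.
Qed.

Lemma fb_sterm Y Z (rho : Y -> term S Z) (sg : Y -> tree S Z) s t :
  (forall y, finite_below (rho y) (sg y)) -> finite_below s t ->
  finite_below (sterm rho s) (stree sg t).
Proof.
move=> hr. elim: s t => [|x|f ss IH] t /=.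
- move=> _; exact: fb_bot.
- move/fb_var => h. rewrite (stree_leaf _ h). exact: hr.
- move/fb_op => [h1 h2]. apply/fb_op; split; first exact: stree_root h1.
  move=> i. rewrite (stree_sub _ _ h1). exact: IH.
Qed.

Lemma eval_morph A B (h : A -> B) Y (v : Y -> A) s :
  h (abot A) = abot B -> (forall f u, h (aop f u) = aop f (fun i => h (u i))) ->
  h (eval v s) = eval (fun y => h (v y)) s.
Proof.
move=> hb ho. elim: s => [|x|f ss IH] //=. rewrite ho. congr aop.
apply: functional_extensionality => i. exact: IH.
Qed.

Lemma eval_mono_v A Y (v v' : Y -> A) s : (forall y, ale (v y) (v' y)) -> ale (eval v s) (eval v' s).
Proof.
move=> h. elim: s => [|x|f ss IH] /=; [exact: ale_refl|exact: h|]. apply: aop_mono. exact: IH.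
Qed.

Definition rl Y Z (h : Y -> Z) (t : tree S Y) : tree S Z := stree (fun y => tree_var S (h y)) t.

Lemma dset_rl A Y Z (h : Y -> Z) (v : Z -> A) t b :
  dset v (rl h t) b <-> dset (fun y => v (h y)) t b.
Proof.
split.
- move=> [s' [hs ->]]. elim: s' t hs => [|z|g ss IH] t hs.
  + by exists (TBot S Y); split; [exact: fb_bot|].
  + move/fb_var: hs. rewrite /rl /=. case E: (t [::]) => [[y|f]|] //= [Ez].
    exists (TVar S y); split; [by apply/fb_var|by rewrite /= Ez].
  + move/fb_op: hs => [h1 h2]. move: h1 h2. rewrite /rl /=.
    case E: (t [::]) => [[y|f]|] //= [Ef]. subst g. move=> h2.
    have : forall i : 'I_(ar f), exists s, finite_below s (sub t i) /\ eval v (ss i) = eval (fun y => v (h y)) s.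
      move=> i. apply: IH. move: (h2 i). by rewrite (stree_sub _ _ E).
    move/(@fin_choice _ _ (fun (i : 'I_(ar f)) s => finite_below s (sub t i) /\ eval v (ss i) = eval (fun y => v (h y)) s)) => [u hu].
    exists (TOp u); split.
    * apply/fb_op; split => //. move=> i; exact: (proj1 (hu i)).
    * congr aop. apply: functional_extensionality => i. exact: (proj2 (hu i)).
- move=> [s [hs ->]]. exists (sterm (fun y => TVar S (h y)) s); split.
  + apply: fb_sterm hs => y. by apply/fb_var.
  + by rewrite eval_sterm.
Qed.

Lemma stree_below A Y Z (v : Z -> A) (sg : Y -> tree S Z) (w : Y -> A) :
  (forall y b, dset v (sg y) b -> ale b (w y)) ->
  forall s' T, finite_below s' (stree sg T) -> exists s, finite_below s T /\ ale (eval v s') (eval w s).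
Proof.
move=> Hw. elim => [|z|g ss IH] T hs.
- exists (TBot S Y); split; [exact: fb_bot|exact: abot_least].
- move/fb_var: hs => /=. case E: (T [::]) => [[y|f]|] //= hz.
  exists (TVar S y); split; first by apply/fb_var.
  apply: Hw. exists (TVar S z); split => //. by apply/fb_var.
- case E: (T [::]) => [[y|f]|].
  + exists (TVar S y); split; first by apply/fb_var.
    apply: Hw. exists (TOp ss); split => //. by rewrite -(stree_leaf sg E).
  + move/fb_op: hs => [h1 h2]. move: h1; rewrite /= E => [[Ef]]. subst g.
    have : forall i : 'I_(ar f), exists s, finite_below s (sub T i) /\ ale (eval v (ss i)) (eval w s).
      move=> i. apply: IH. move: (h2 i). by rewrite (stree_sub _ _ E).
    move/(@fin_choice _ _ (fun (i : 'I_(ar f)) s => finite_below s (sub T i) /\ ale (eval v (ss i)) (eval w s))) => [u hu].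
    exists (TOp u); split.
    * apply/fb_op; split => //. move=> i; exact: (proj1 (hu i)).
    * apply: aop_mono => i. exact: (proj2 (hu i)).
  + move/fb_op: hs => [h1 _]. by move: h1; rewrite /= E.
Qed.

Lemma stree_lub_term A Y Z (v : Z -> A) (sg : Y -> tree S Z) (w : Y -> A) (P : tree S Z -> Prop) :
  (forall f (ts : 'I_(ar f) -> tree S Z) s, (forall i, P (ts i)) ->
     (forall i, is_lub ale (dset v (ts i)) (s i)) ->
     is_lub ale (opset (fun i => dset v (ts i))) (aop f s)) ->
  (forall y, is_lub ale (dset v (sg y)) (w y)) ->
  (forall s, P (stree sg (term_tree s))) ->
  forall s, is_lub ale (dset v (stree sg (term_tree s))) (eval w s).
Proof.
move=> Hop Hw HP. elim => [|y|f ss IH] /=.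
- rewrite stree_bot. exact: lub_bot.
- rewrite stree_var. exact: Hw.
- rewrite stree_op. apply/lub_op. apply: Hop => i; [exact: HP|exact: IH].
Qed.

Lemma stree_lub A Y Z (v : Z -> A) (sg : Y -> tree S Z) (w : Y -> A) (P : tree S Z -> Prop) :
  (forall f (ts : 'I_(ar f) -> tree S Z) s, (forall i, P (ts i)) ->
     (forall i, is_lub ale (dset v (ts i)) (s i)) ->
     is_lub ale (opset (fun i => dset v (ts i))) (aop f s)) ->
  (forall y, is_lub ale (dset v (sg y)) (w y)) ->
  (forall s, P (stree sg (term_tree s))) ->
  forall T c, is_lub ale (dset v (stree sg T)) c <-> is_lub ale (dset w T) c.
Proof.
move=> Hop Hw HP T c.
have Hw' : forall y b, dset v (sg y) b -> ale b (w y) by move=> y b hb; exact: (proj1 (Hw y)).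
split; apply: lub_sameub.
- move=> c' hc b [s [hs ->]]. have [_ lst] := stree_lub_term Hop Hw HP s.
  apply: lst => b' [s' [hs' ->]]. apply: hc. exists s'; split => //.
  apply: fb_trans hs' _. exact: stree_mono.
- move=> c' hc b [s' [hs' ->]]. have [s [hs hle]] := stree_below Hw' hs'.
  apply: ale_trans hle _. apply: hc. by exists s.
- move=> c' hc b [s' [hs' ->]]. have [s [hs hle]] := stree_below Hw' hs'.
  apply: ale_trans hle _. apply: hc. by exists s.
- move=> c' hc b [s [hs ->]]. have [_ lst] := stree_lub_term Hop Hw HP s.
  apply: lst => b' [s' [hs' ->]]. apply: hc. exists s'; split => //.
  apply: fb_trans hs' _. exact: stree_mono.
Qed.

End Subst.


Lemma choice_fun (T U : Type) (R : T -> U -> Prop) :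
  (forall x, exists y, R x y) -> exists g, forall x, R x (g x).
Proof.
move=> H. exists (fun x => proj1_sig (constructive_indefinite_description _ (H x))).
move=> x. exact: proj2_sig.
Qed.

Lemma dir_list T (le : T -> T -> Prop) (P : T -> Prop) :
  (forall a b c, le a b -> le b c -> le a c) -> directed le P ->
  forall l, (forall x, List.In x l -> P x) -> exists c, P c /\ forall x, List.In x l -> le x c.
Proof.
move=> tr [[c0 hc0] dir]. elim => [|x l IH] H; first by exists c0.
have [c [hc Hc]] := IH (fun y hy => H y (or_intror hy)).
have [z [hz [h1 h2]]] := dir x c (H x (or_introl erefl)) hc.
exists z; split => // y [<-|hy] //. exact: tr (Hc y hy) h2.
Qed.

Lemma dir_fin T (le : T -> T -> Prop) (P : T -> Prop) n (w : 'I_n -> T) :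
  (forall a b c, le a b -> le b c -> le a c) -> directed le P ->
  (forall i, P (w i)) -> exists c, P c /\ forall i, le (w i) c.
Proof.
move=> tr dir H.
have H' : forall x, List.In x (map w (enum 'I_n)) -> P x.
  move=> x /List.in_map_iff [i [<- _]]. exact: H.
have [c [hc Hc]] := dir_list tr dir H'.
exists c; split => // i. apply: Hc. apply: List.in_map. exact: ord_in.
Qed.

Section Ideals.
Variable S : signature.
Variable F : ordAlg S.

Record ideal := Ideal {
  ival : F -> Prop;
  i_ne : exists c, ival c;
  i_down : forall c d, ale c d -> ival d -> ival c;
  i_dir : forall a b, ival a -> ival b -> exists c, ival c /\ ale a c /\ ale b c }.

Lemma ideal_eq (I J : ideal) : (forall c, ival I c <-> ival J c) -> I = J.
Proof.
case: I => P1 n1 d1 r1; case: J => P2 n2 d2 r2 /= H.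
have E : P1 = P2.
  apply: functional_extensionality => c. apply: propositional_extensionality. exact: H.
subst P2. f_equal; apply: proof_irrelevance.
Qed.

Lemma ideal_directed (I : ideal) : directed ale (ival I).
Proof. split; [exact: i_ne|exact: i_dir]. Qed.

Lemma ale_trans' : forall a b c : F, ale a b -> ale b c -> ale a c.
Proof. exact: ale_trans. Qed.

Definition pid (b : F) : ideal.
refine (@Ideal (fun c => ale c b) _ _ _).
- exists b. exact: ale_refl.
- move=> c d h1 h2. exact: ale_trans h1 h2.
- move=> a c h1 h2. exists b. split; [exact: ale_refl|by split].
Defined.

Definition iop (f : sym S) (U : 'I_(ar f) -> ideal) : ideal.
refine (@Ideal (fun c => exists w, (forall i, ival (U i) (w i)) /\ ale c (aop f w)) _ _ _).
- have [w hw] := @fin_choice _ _ (fun (i : 'I_(ar f)) c => ival (U i) c) (fun i => i_ne (U i)).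
  exists (aop f w), w; split => //. exact: ale_refl.
- move=> c d h [w [hw hd]]. exists w; split => //. exact: ale_trans h hd.
- move=> a b [w1 [hw1 ha]] [w2 [hw2 hb]].
  have [w hw] := @fin_choice _ _ (fun (i : 'I_(ar f)) c => ival (U i) c /\ ale (w1 i) c /\ ale (w2 i) c)
     (fun i => i_dir (hw1 i) (hw2 i)).
  exists (aop f (fun i => w i)); split.
  + exists (fun i => w i); split; [exact: (fun i => proj1 (hw i))|exact: ale_refl].
  + split.
    * apply: ale_trans ha _. apply: aop_mono => i. exact: (proj1 (proj2 (hw i))).
    * apply: ale_trans hb _. apply: aop_mono => i. exact: (proj2 (proj2 (hw i))).
Defined.

Definition isub (I J : ideal) : Prop := forall c, ival I c -> ival J c.

Definition IA : ordAlg S.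
refine (@OrdAlg S ideal isub (pid (abot F)) iop _ _ _ _ _).
- by move=> a c.
- move=> a b c h1 h2 x hx. exact: h2 (h1 x hx).
- move=> a b h1 h2. apply: ideal_eq => c; split; [exact: h1|exact: h2].
- move=> a c /= hc. have [x hx] := i_ne a. apply: i_down hx. apply: ale_trans hc _. exact: abot_least.
- move=> f u v h c [w [hw hc]]. exists w; split => // i. exact: h i _ (hw i).
Defined.

Definition iunion (D : ideal -> Prop) (ne : exists d, D d)
  (dir : forall x y, D x -> D y -> exists z, D z /\ isub x z /\ isub y z) : ideal.
refine (@Ideal (fun c => exists d, D d /\ ival d c) _ _ _).
- have [d hd] := ne. have [c hc] := i_ne d. by exists c, d.
- move=> c d' h [d [hd hc]]. exists d; split => //. exact: i_down h hc.
- move=> a b [d1 [hd1 ha]] [d2 [hd2 hb]]. have [z [hz [h1 h2]]] := dir d1 d2 hd1 hd2.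
  have [c [hc [hac hbc]]] := i_dir (h1 a ha) (h2 b hb). exists c; split; last by split.
  by exists z.
Defined.

Lemma lub_union (D : IA -> Prop) (a : IA) c :
  directed ale D -> is_lub ale D a -> ival a c -> exists d, D d /\ ival d c.
Proof.
move=> [ne dir] [ub lst] hc.
have := lst (iunion ne dir : IA) _ c hc. apply.
move=> b hb x hx. by exists b.
Qed.

Lemma lub_union_ex (D : IA -> Prop) :
  directed ale D -> exists a, is_lub ale D a.
Proof.
move=> [ne dir]. exists (iunion ne dir : IA). split.
- move=> b hb x hx. by exists b.
- move=> c hc x [d [hd hx]]. exact: hc d hd x hx.
Qed.

Lemma IA_omega : omega_cont IA.
Proof.
split.
- move=> D _ dir. exact: lub_union_ex.
- move=> f D s _ dir hs. split.
  + move=> b [u [hu ->]]. apply: aop_mono => i. apply: (proj1 (hs i)). by exists u.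
  + move=> c hc x [w [hw hx]].
    have hdi : forall i, directed ale (fun a => exists u, D u /\ a = u i).
      move=> i. have [[u0 hu0] dr] := dir. split; first by exists (u0 i), u0.
      move=> a b [u1 [hu1 ->]] [u2 [hu2 ->]]. have [z [hz [h1 h2]]] := dr u1 u2 hu1 hu2.
      exists (z i); split; [by exists z|by split].
    have : forall i, exists u, D u /\ ival (u i) (w i).
      move=> i. have [d [[u [hu ->]] hd]] := lub_union (hdi i) (hs i) (hw i). by exists u.
    move/(@fin_choice _ _ (fun i u => D u /\ ival (u i) (w i))) => [U hU].
    have tr : forall a b c : 'I_(ar f) -> IA, (forall i, ale (a i) (b i)) -> (forall i, ale (b i) (c i)) -> forall i, ale (a i) (c i).
      move=> a b c' h1 h2 i. exact: ale_trans (h1 i) (h2 i).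
    have [u [hu Hu]] := dir_fin tr dir (w := U) (fun i => proj1 (hU i)).
    apply: (hc (aop f u)); first by exists u.
    exists w; split; last exact: hx. move=> j. have H1 := Hu j. have H2 := H1 j. apply: H2. exact: (proj2 (hU j)).
Qed.

Lemma eval_IA Y (v : Y -> IA) t c :
  ival (eval v t) c <-> exists w : Y -> F, (forall y, ival (v y) (w y)) /\ ale c (eval w t).
Proof.
split.
- elim: t c => [|y|f ts IH] c /=.
  + move=> hc. have [w hw] := @choice_fun _ _ (fun y c => ival (v y) c) (fun y => i_ne (v y)).
    by exists w.
  + move=> hc.
    have : forall y', exists b, ival (v y') b /\ (y' = y -> ale c b).
      move=> y'. case: (classic (y' = y)) => [E|NE].
      * subst y'. exists c; split => // _; exact: ale_refl.
      * have [b hb] := i_ne (v y'). by exists b.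
    move/(@choice_fun _ _ (fun y' b => ival (v y') b /\ (y' = y -> ale c b))) => [w hw].
    exists w; split; [exact: (fun y => proj1 (hw y))|exact: (proj2 (hw y))].
  + move=> [u [hu hc]].
    have : forall i, exists w : Y -> F, (forall y, ival (v y) (w y)) /\ ale (u i) (eval w (ts i)).
      move=> i. exact: IH.
    move/(@fin_choice _ _ (fun i (w : Y -> F) => (forall y, ival (v y) (w y)) /\ ale (u i) (eval w (ts i)))) => [W hW].
    have : forall y, exists b, ival (v y) b /\ forall i, ale (W i y) b.
      move=> y. apply: (dir_fin ale_trans' (ideal_directed (v y))) => i. exact: (proj1 (hW i)).
    move/(@choice_fun _ _ (fun y b => ival (v y) b /\ forall i, ale (W i y) b)) => [w hw].
    exists w; split; first exact: (fun y => proj1 (hw y)).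
    apply: ale_trans hc _. apply: aop_mono => i. apply: ale_trans (proj2 (hW i)) _.
    apply: eval_mono_v => y. exact: (proj2 (hw y)).
- move=> [w [hw hc]]. apply: (i_down hc).
  elim: t {hc} => [|y|f ts IH] /=; [exact: ale_refl|exact: hw|].
  exists (fun i => eval w (ts i)); split; [exact: IH|exact: ale_refl].
Qed.

Lemma IA_sat (E : ineqs S) : sat E F -> sat E IA.
Proof.
move=> hF t t' ht v c /eval_IA [w [hw hc]]. apply/eval_IA. exists w; split => //.
exact: ale_trans hc (hF t t' ht w).
Qed.

End Ideals.

Section Compact.
Variable S : signature.
Variables (E : ineqs S) (X : Type) (Fw : ordAlg S) (etaw : X -> Fw) (F : ordAlg S) (eta : X -> F).
Hypothesis Hw : free_omega E etaw.
Hypothesis HF : sat E F.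

Lemma ord_morph_eval (A B : ordAlg S) (h : A -> B) Y (v : Y -> A) s :
  ord_morph h -> h (eval v s) = eval (fun y => h (v y)) s.
Proof. move=> [hb [_ ho]]. exact: eval_morph. Qed.

Lemma compact_key : exists g : Fw -> IA F, ord_morph g /\
  forall t a, ct_eval etaw t a -> forall c, (ival (g a) c <-> exists s, finite_below s t /\ ale c (eval eta s)).
Proof.
have [_ [_ U]] := Hw.
have [g [[hm hsup] [hg _]]] := U (IA F) (IA_omega F) (IA_sat HF) (fun x => pid (eta x)).
exists g; split => // t a ha c.
have geval : forall s c, ival (g (eval etaw s)) c <-> ale c (eval eta s).
  move=> s c'. rewrite (ord_morph_eval _ _ hm). split.
  - move/eval_IA => [w [hw hc]]. apply: ale_trans hc _. apply: eval_mono_v => y.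
    move: (hw y). by rewrite hg.
  - move=> hc. apply/eval_IA. exists eta; split => // y. rewrite hg. exact: ale_refl.
split.
- move=> hc. have hch := proj1 (dset_chain _ _ _) ha.
  have := hsup _ (chain_countable etaw t) (chain_directed etaw t) a hch.
  move=> hl.
  have hdir : directed ale (fun b => exists a', chain_set etaw t a' /\ b = g a').
    have [[x0 hx0] dr] := chain_directed etaw t. split; first by exists (g x0), x0.
    move=> x y [a1 [h1 ->]] [a2 [h2 ->]]. have [z [hz [l1 l2]]] := dr a1 a2 h1 h2.
    have [_ [hmono _]] := hm.
    exists (g z); split; first by exists z. split; exact: hmono.
  have [d [[a' [[k ->] ->]] hd]] := lub_union hdir hl hc.
  exists (trunc k t); split; first exact: trunc_fb. by apply/geval.
- move=> [s [hs hc]]. have [_ [hmono _]] := hm.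
  have : ale (eval etaw s) a by apply: (proj1 ha); exists s.
  move/hmono => H. apply: H. by apply/geval.
Qed.

Lemma compact t1 t2 a1 a2 : ct_eval etaw t1 a1 -> ct_eval etaw t2 a2 -> ale a1 a2 ->
  forall s1, finite_below s1 t1 -> exists s2, finite_below s2 t2 /\ ale (eval eta s1) (eval eta s2).
Proof.
move=> h1 h2 h12 s1 hs1. have [g [[_ [hmono _]] key]] := compact_key.
have : ival (g a1) (eval eta s1).
  apply/(key _ _ h1). exists s1; split => //. exact: ale_refl.
move/(hmono _ _ h12). by move/(key _ _ h2).
Qed.

End Compact.

Section Gen2.
Variable S : signature.
Variables (E : ineqs S) (X : Type) (F : ordAlg S) (eta : X -> F).
Hypothesis HF : free_ord E eta.

Definition SubT := {b : F | exists r, b = eval eta r}.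

Lemma SubA_op_cl (f : sym S) (u : 'I_(ar f) -> SubT) :
  exists r, aop f (fun i => proj1_sig (u i)) = eval eta r.
Proof.
have [r hr] := @fin_choice _ _ (fun i r => proj1_sig (u i) = eval eta r) (fun i => proj2_sig (u i)).
exists (TOp r) => /=. congr aop. apply: functional_extensionality => i. exact: hr.
Qed.

Definition SubA : ordAlg S.
refine (@OrdAlg S SubT (fun a b => ale (proj1_sig a) (proj1_sig b))
  (exist _ (abot F) (ex_intro _ (TBot S X) erefl))
  (fun f u => exist _ (aop f (fun i => proj1_sig (u i))) (SubA_op_cl u)) _ _ _ _ _).
- move=> a; exact: ale_refl.
- move=> a b c; exact: ale_trans.
- move=> [a pa] [b pb] /= h1 h2. have E0 : a = b by apply: ale_antisym. subst b. f_equal. exact: proof_irrelevance.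
- move=> a; exact: abot_least.
- move=> f u v h. apply: aop_mono. exact: h.
Defined.

Lemma generated : forall b : F, exists r, b = eval eta r.
Proof.
have [hs U] := HF.
have hsub : sat E SubA.
  move=> t t' ht v /=. rewrite !(@eval_morph _ SubA F (fun a => proj1_sig a)) //. exact: hs.
have [g [hg [hgx _]]] := U SubA hsub (fun x => exist _ (eta x) (ex_intro _ (TVar S x) erefl)).
have [id0 [hid [hidx Uid]]] := U F hs eta.
have m1 : ord_morph (fun b : F => proj1_sig (g b)).
  have [h1 [h2 h3]] := hg. split; last split.
  - by rewrite h1.
  - move=> a b hab. exact: h2.
  - move=> f u. by rewrite h3.
have m2 : ord_morph (fun b : F => b).
  split; last split => //. by [].
have e1 : forall x, proj1_sig (g (eta x)) = eta x by move=> x; rewrite hgx.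
have E1 := Uid _ m1 e1.
have E2 := Uid _ m2 (fun x => erefl).
move=> b. have := proj2_sig (g b). by rewrite /= E1 -E2.
Qed.

End Gen2.


Section Main.
Variable S : signature.
Unset Implicit Arguments.
Variables (E : ineqs S) (Delta : tfamily S) (X : Type) (Fw : ordAlg S) (etaw : X -> Fw)
  (F : ordAlg S) (eta : X -> F).
Set Implicit Arguments.
Hypothesis HQ : quasi_regular Delta.
Hypothesis Hw : free_omega E etaw.
Hypothesis HF : free_ord E eta.

Lemma HwC : omega_cont Fw. Proof. exact: (proj1 Hw). Qed.
Lemma HwS : sat E Fw. Proof. exact: (proj1 (proj2 Hw)). Qed.
Lemma HFS : sat E F. Proof. exact: (proj1 HF). Qed.

Lemma ct_op f (ts : 'I_(ar f) -> tree S X) s :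
  (forall i, ct_eval etaw (ts i) (s i)) -> ct_eval etaw (tree_op ts) (aop f s).
Proof. move=> h. apply/lub_op. exact: opsup_omega HwC h. Qed.

Definition RT := {c : Fw | exists t, Delta X t /\ ct_eval etaw t c}.

Lemma RA_op_cl (f : sym S) (u : 'I_(ar f) -> RT) :
  exists t, Delta X t /\ ct_eval etaw t (aop f (fun i => proj1_sig (u i))).
Proof.
have [ts hts] := @fin_choice _ _ (fun i t => Delta X t /\ ct_eval etaw t (proj1_sig (u i))) (fun i => proj2_sig (u i)).
exists (tree_op ts); split.
- have [_ [_ [_ [ho _]]]] := HQ. apply: ho => i. exact: (proj1 (hts i)).
- apply: ct_op => i. exact: (proj2 (hts i)).
Qed.

Lemma RA_bot_cl : exists t, Delta X t /\ ct_eval etaw t (abot Fw).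
Proof. exists (tree_bot S X); split; [exact: (proj1 (proj2 HQ))|exact: lub_bot]. Qed.

Lemma RT_inj (a b : RT) : proj1_sig a = proj1_sig b -> a = b.
Proof. case: a b => [a pa] [b pb] /= E0. subst b. f_equal. exact: proof_irrelevance. Qed.

Definition RA : ordAlg S.
refine (@OrdAlg S RT (fun a b => ale (proj1_sig a) (proj1_sig b))
  (exist _ (abot Fw) RA_bot_cl)
  (fun f u => exist _ (aop f (fun i => proj1_sig (u i))) (RA_op_cl u)) _ _ _ _ _).
- move=> a; exact: ale_refl.
- move=> a b c; exact: ale_trans.
- move=> a b h1 h2. apply: RT_inj. by apply: ale_antisym.
- move=> a; exact: abot_least.
- move=> f u v h. apply: aop_mono. exact: h.
Defined.

Definition iota (a : RA) : Fw := proj1_sig a.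

Definition tau (a : RA) : tree S X :=
  proj1_sig (constructive_indefinite_description _ (proj2_sig a)).

Lemma tau_spec a : Delta X (tau a) /\ ct_eval etaw (tau a) (iota a).
Proof. exact: (proj2_sig (constructive_indefinite_description _ (proj2_sig a))). Qed.

Lemma gen_cl x : exists t, Delta X t /\ ct_eval etaw t (etaw x).
Proof. exists (tree_var S x); split; [exact: (proj1 (proj2 (proj2 HQ)))|exact: lub_var]. Qed.

Definition gen (x : X) : RA := exist _ (etaw x) (gen_cl x).

Lemma eval_iota Y (v : Y -> RA) s : iota (eval v s) = eval (fun y => iota (v y)) s.
Proof. by apply: eval_morph. Qed.

Lemma RA_reflect (P : RA -> Prop) (a : RA) :
  is_lub ale (fun b => exists a', P a' /\ b = iota a') (iota a) -> is_lub ale P a.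
Proof.
move=> [ub lst]; split.
- move=> b hb. apply: ub. by exists b.
- move=> c hc. apply: lst => b [a' [ha' ->]]. exact: hc.
Qed.

Lemma Hop_w f (ts : 'I_(ar f) -> tree S X) s : (forall i : 'I_(ar f), True) ->
  (forall i, is_lub ale (dset etaw (ts i)) (s i)) ->
  is_lub ale (opset (fun i => dset etaw (ts i))) (aop f s).
Proof. move=> _ h. exact: opsup_omega HwC h. Qed.

Lemma RA_lub_iota (T : tree S RA) c :
  is_lub ale (dset etaw (stree tau T)) c <-> is_lub ale (dset iota T) c.
Proof.
apply: (@stree_lub _ _ _ _ _ _ _ (fun _ => True)) => //.
- exact: Hop_w.
- move=> y. exact: (proj2 (tau_spec y)).
Qed.

Lemma RA_lub (T : tree S RA) : Delta RA T ->
  exists a : RA, is_lub ale (delta_set T) a /\ is_lub ale (dset iota T) (iota a) /\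
     ct_eval etaw (stree tau T) (iota a).
Proof.
move=> hT. have [c hc] := omega_lub etaw (stree tau T) HwC.
have hD : Delta X (stree tau T).
  apply: delta_stree HQ _ hT => y. exact: (proj1 (tau_spec y)).
pose a : RA := exist _ c (ex_intro _ _ (conj hD hc)).
exists a; split; last split => //.
- apply: RA_reflect. apply: is_lub_ext (proj1 (RA_lub_iota T c) hc).
  move=> b; split.
  + move=> [s [hs ->]]. exists (eval (fun b => b) s); split; first by exists s.
    by rewrite eval_iota.
  + move=> [a' [[s [hs ->]] ->]]. exists s; split => //. by rewrite eval_iota.
- exact/RA_lub_iota.
Qed.

Lemma RA_lub_unique (T : tree S RA) (a : RA) : Delta RA T -> is_lub ale (delta_set T) a ->
  is_lub ale (dset iota T) (iota a) /\ ct_eval etaw (stree tau T) (iota a).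
Proof.
move=> hT ha. have [a0 [h1 [h2 h3]]] := RA_lub hT.
by rewrite (lub_unique ha h1).
Qed.

Lemma opset_ext (A : ordAlg S) (f : sym S) (P Q : 'I_(ar f) -> A -> Prop) b :
  (forall i x, P i x <-> Q i x) -> (opset P b <-> opset Q b).
Proof.
move=> H; split => [[u [hu ->]]|[u [hu ->]]]; exists u; split => // i; apply/H; exact: hu.
Qed.

Lemma RA_delta : delta_alg Delta RA.
Proof.
split.
- move=> t ht. have [a [ha _]] := RA_lub ht. by exists a.
- move=> f ts s hts hs.
  have [_ [_ [_ [ho _]]]] := HQ.
  have hT : Delta RA (tree_op ts) by exact: ho.
  have [a [_ [ha1 ha2]]] := RA_lub hT.
  have Hs : forall i, ct_eval etaw (stree tau (ts i)) (iota (s i)).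
    move=> i. exact: (proj2 (RA_lub_unique (hts i) (hs i))).
  have Ea : iota a = aop f (fun i => iota (s i)).
    apply: (lub_unique ha2). rewrite stree_op. exact: ct_op.
  apply: RA_reflect. rewrite /= -/(iota _).
  have : is_lub ale (opset (fun i => dset iota (ts i))) (iota a) by apply/lub_op.
  rewrite Ea. apply: is_lub_ext => b; split.
  + move=> [u [hu ->]].
    have hu' : forall i, exists a' : RA, delta_set (ts i) a' /\ u i = iota a'.
      move=> i. have [s0 [h1 h2]] := hu i. exists (eval (fun b => b) s0); split.
      - by exists s0.
      - by rewrite h2 eval_iota.
    have [w hw] := @fin_choice _ _ (fun i (a' : RA) => delta_set (ts i) a' /\ u i = iota a') hu'.
    exists (aop f w); split.
    * exists w; split => // i. exact: (proj1 (hw i)).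
    * rewrite /iota /=. congr aop. apply: functional_extensionality => i. exact: (proj2 (hw i)).
  + move=> [a' [[u [hu ->]] ->]]. exists (fun i => iota (u i)); split => // i.
    have [s0 [h1 ->]] := hu i. exists s0; split => //. by rewrite eval_iota.
Qed.

Lemma RA_sat : sat E RA.
Proof.
move=> t t' ht v. rewrite /= -/(iota _) -/(iota _) !eval_iota. exact: HwS.
Qed.

Section Univ.
Variable B : ordAlg S.
Hypothesis HB : delta_alg Delta B.
Hypothesis HBS : sat E B.
Variable h : X -> B.

Lemma delta_rl Y Z (k : Y -> Z) (t : tree S Y) : Delta Y t -> Delta Z (rl k t).
Proof. move=> ht. apply: delta_stree HQ _ ht => y. exact: (proj1 (proj2 (proj2 HQ))). Qed.

Lemma lubB t : Delta X t -> exists b, is_lub ale (dset h t) b.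
Proof.
move=> ht. have [b hb] := proj1 HB _ (delta_rl h ht). exists b.
apply: is_lub_ext hb => b'. exact: dset_rl.
Qed.

Lemma opsupB f (ts : 'I_(ar f) -> tree S X) s : (forall i, Delta X (ts i)) ->
  (forall i, is_lub ale (dset h (ts i)) (s i)) ->
  is_lub ale (opset (fun i => dset h (ts i))) (aop f s).
Proof.
move=> hts hs.
have hs' : forall i, is_lub ale (delta_set (rl h (ts i))) (s i).
  move=> i. apply: is_lub_ext (hs i) => b. split => hb; [apply/dset_rl; exact: hb|move/dset_rl: hb; exact]. 
have H := proj2 HB f (fun i => rl h (ts i)) s (fun i => delta_rl h (hts i)) hs'.
apply: is_lub_ext H => b. rewrite /opset. split => [[u [hu ->]]|[u [hu ->]]]; exists u; split => // i.
- move/dset_rl: (hu i); exact.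
- apply/dset_rl; exact: hu.
Qed.

Lemma monoB t1 t2 a1 a2 b1 b2 : ct_eval etaw t1 a1 -> ct_eval etaw t2 a2 -> ale a1 a2 ->
  is_lub ale (dset h t1) b1 -> is_lub ale (dset h t2) b2 -> ale b1 b2.
Proof.
move=> h1 h2 h12 [_ l1] [u2 _].
have [kB [hk [hkx _]]] := proj2 HF B HBS h.
have keval : forall s, kB (eval eta s) = eval h s.
  move=> s. rewrite (ord_morph_eval _ _ hk). apply: eval_ext => y. exact: hkx.
apply: l1 => b [s [hs ->]].
have [s2 [hs2 hle]] := compact eta Hw HFS h1 h2 h12 hs.
have [_ [hmono _]] := hk.
apply: ale_trans (u2 (eval h s2) _); last by exists s2.
rewrite -!keval. exact: hmono.
Qed.

Definition gB (a : RA) : B :=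
  proj1_sig (constructive_indefinite_description _ (lubB (proj1 (tau_spec a)))).

Lemma gB_spec a : is_lub ale (dset h (tau a)) (gB a).
Proof. rewrite /gB. exact: proj2_sig. Qed.

Lemma gB_val t a : Delta X t -> ct_eval etaw t (iota a) -> is_lub ale (dset h t) (gB a).
Proof.
move=> ht ha. have [b hb] := lubB ht.
have E0 : b = gB a.
  apply: ale_antisym.
  - exact: monoB ha (proj2 (tau_spec a)) (ale_refl _ _ _) hb (gB_spec a).
  - exact: monoB (proj2 (tau_spec a)) ha (ale_refl _ _ _) (gB_spec a) hb.
by rewrite -E0.
Qed.

Lemma gB_morph : ord_morph gB.
Proof.
split; last split.
- have hc : ct_eval etaw (tree_bot S X) (iota (abot RA)) by exact: lub_bot.
  have H := gB_val (proj1 (proj2 HQ) X) hc.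
  apply: (lub_unique H). exact: lub_bot.
- move=> a b hab. exact: monoB (proj2 (tau_spec a)) (proj2 (tau_spec b)) hab (gB_spec a) (gB_spec b).
- move=> f u.
  have [_ [_ [_ [ho _]]]] := HQ.
  have hD : Delta X (tree_op (fun i => tau (u i))) by apply: ho => i; exact: (proj1 (tau_spec _)).
  have hc : ct_eval etaw (tree_op (fun i => tau (u i))) (iota (aop f u)).
    apply: ct_op => i. exact: (proj2 (tau_spec _)).
  have := gB_val hD hc. move/lub_op => H1.
  apply: (lub_unique H1). apply: opsupB => i; [exact: (proj1 (tau_spec _))|exact: gB_spec].
Qed.

Lemma gB_gen x : gB (gen x) = h x.
Proof.
have hc : ct_eval etaw (tree_var S x) (iota (gen x)) by exact: lub_var.
have H := gB_val (proj1 (proj2 (proj2 HQ)) X x) hc. apply: (lub_unique H). exact: lub_var.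
Qed.

Lemma gB_delta : delta_morph Delta gB.
Proof.
split; first exact: gB_morph.
move=> T hT a ha. have [_ hc] := RA_lub_unique hT ha.
have hD : Delta X (stree tau T) by apply: delta_stree HQ _ hT => y; exact: (proj1 (tau_spec y)).
have := gB_val hD hc.
move/(@stree_lub _ _ _ _ h tau gB (fun t => Delta X t) opsupB gB_spec).
have HP : forall s, Delta X (stree tau (term_tree s)).
  move=> s. apply: delta_stree HQ _ (delta_term _ HQ) => y. exact: (proj1 (tau_spec y)).
move/(_ HP). apply: is_lub_ext => b; split.
- move=> [s [hs ->]]. exists (eval (fun b => b) s); split; first by exists s.
  by rewrite (ord_morph_eval _ _ gB_morph).
- move=> [a' [[s [hs ->]] ->]]. exists s; split => //. by rewrite (ord_morph_eval _ _ gB_morph).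
Qed.

Lemma gB_unique (g' : RA -> B) : delta_morph Delta g' -> (forall x, g' (gen x) = h x) ->
  forall a, g' a = gB a.
Proof.
move=> [hm hs] hg a.
pose T := rl gen (tau a).
have hT : Delta RA T by exact: delta_rl (proj1 (tau_spec a)).
have [a0 [h1 [h2 _]]] := RA_lub hT.
have Ea : a0 = a.
  apply: RT_inj. apply: (lub_unique h2). apply: is_lub_ext (proj2 (tau_spec a)) => b.
  rewrite dset_rl. by [].
subst a0.
have := hs T hT a h1. move=> H. apply: (lub_unique H). apply: is_lub_ext (gB_spec a) => b.
split.
- move=> [s [hs' ->]]. exists (eval gen s); split.
  + apply/dset_rl. by exists s.
  + rewrite (ord_morph_eval _ _ hm). apply: eval_ext => y. by rewrite hg.
- move=> [a' [ha' ->]]. move/dset_rl: ha' => [s [hs' ->]]. exists s; split => //.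
  rewrite (ord_morph_eval _ _ hm). apply: eval_ext => y. by rewrite hg.
Qed.

End Univ.

Definition phi (a : RA) (c : F) : Prop := exists s, finite_below s (tau a) /\ ale c (eval eta s).

Lemma phi_rep t a c : ct_eval etaw t (iota a) ->
  (phi a c <-> exists b, dset eta t b /\ ale c b).
Proof.
move=> ht. have ha := proj2 (tau_spec a). split.
- move=> [s [hs hc]]. have [s2 [hs2 hle]] := compact eta Hw HFS ha ht (ale_refl _ _ _) hs.
  exists (eval eta s2); split; [by exists s2|exact: ale_trans hc hle].
- move=> [b [[s [hs ->]] hc]]. have [s2 [hs2 hle]] := compact eta Hw HFS ht ha (ale_refl _ _ _) hs.
  exists s2; split => //. exact: ale_trans hc hle.
Qed.

Lemma phi_ideal a : delta_ideal Delta (phi a).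
Proof.
exists (rl eta (tau a)); split; first exact: delta_rl (proj1 (tau_spec a)).
move=> c. split.
- move=> [s [hs hc]]. exists (eval eta s); split => //. apply/dset_rl. by exists s.
- move=> [b [/dset_rl [s [hs ->]] hc]]. by exists s.
Qed.

Lemma phi_surj C : delta_ideal Delta C -> exists a, forall c, phi a c <-> C c.
Proof.
move=> [t' [ht' HC]].
have [r hr] := @choice_fun _ _ (fun b r => b = eval eta r) (generated HF).
pose sg := fun b => term_tree (r b).
pose t := stree sg t'.
have hD : Delta X t by apply: delta_stree HQ _ ht' => b; exact: delta_term.
have [c0 hc0] := omega_lub etaw t HwC.
pose a0 : RA := exist _ c0 (ex_intro _ t (conj hD hc0)).
have hc0' : ct_eval etaw t (iota a0) := hc0.
exists a0 => c.
rewrite (phi_rep c hc0') HC. split.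
- move=> [b [[s [hs ->]] hc]].
  have Hw' : forall y b', dset eta (sg y) b' -> ale b' y.
    move=> y b' [s' [hs' ->]]. apply: (@ale_trans _ _ _ (eval eta (r y))); first exact: eval_mono_fb. rewrite -hr. exact: ale_refl.
  have [s'' [hs'' hle]] := stree_below Hw' hs.
  exists (eval (fun b => b) s''); split; [by exists s''|exact: ale_trans hc hle].
- move=> [b [[s'' [hs'' ->]] hc]]. exists (eval eta (sterm r s'')); split.
  + exists (sterm r s''); split => //. apply: fb_sterm hs'' => y. exact: tle_refl.
  + rewrite eval_sterm. have -> : eval (fun y => eval eta (r y)) s'' = eval (fun b => b) s'' by apply: eval_ext => y; rewrite -hr. exact: hc.
Qed.

Lemma phi_order a b : ale a b <-> (forall c, phi a c -> phi b c).
Proof.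
have ha := proj2 (tau_spec a). have hb := proj2 (tau_spec b).
split.
- move=> hab c [s [hs hc]]. have [s2 [hs2 hle]] := compact eta Hw HFS ha hb hab hs.
  exists s2; split => //. exact: ale_trans hc hle.
- move=> H. have [kW [hk [hkx _]]] := proj2 HF Fw HwS etaw.
  have keval : forall s, kW (eval eta s) = eval etaw s.
    move=> s. rewrite (ord_morph_eval _ _ hk). apply: eval_ext => y. exact: hkx.
  have [_ [hmono _]] := hk.
  apply: (proj2 ha) => x [s [hs ->]].
  have [s2 [hs2 hle]] : phi b (eval eta s) by apply: H; exists s; split => //; exact: ale_refl.
  apply: ale_trans (proj1 hb (eval etaw s2) _); last by exists s2.
  rewrite -!keval. exact: hmono.
Qed.

Lemma phi_op f (u : 'I_(ar f) -> RA) c :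
  phi (aop f u) c <-> exists w, (forall i, phi (u i) (w i)) /\ ale c (aop f w).
Proof.
have hc : ct_eval etaw (tree_op (fun i => tau (u i))) (iota (aop f u)).
  apply: ct_op => i. exact: (proj2 (tau_spec _)).
rewrite (phi_rep c hc). split.
- move=> [b [/dset_op [->|[w [hw ->]]] hcb]].
  + exists (fun _ => abot F); split.
    * move=> i. exists (TBot S X); split; [exact: fb_bot|exact: ale_refl].
    * apply: ale_trans hcb _. exact: abot_least.
  + exists w; split => // i. have [s [hs ->]] := hw i. exists s; split => //. exact: ale_refl.
- move=> [w [hw hcw]].
  have [ss hss] := @fin_choice _ _ (fun i s => finite_below s (tau (u i)) /\ ale (w i) (eval eta s)) hw.
  exists (aop f (fun i => eval eta (ss i))); split.
  + apply/dset_op. right. exists (fun i => eval eta (ss i)); split => // i.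
    exists (ss i); split => //. exact: (proj1 (hss i)).
  + apply: ale_trans hcw _. apply: aop_mono => i. exact: (proj2 (hss i)).
Qed.

Lemma phi_gen x c : phi (gen x) c <-> ale c (eta x).
Proof.
have hc : ct_eval etaw (tree_var S x) (iota (gen x)) by exact: lub_var.
rewrite (phi_rep c hc). split.
- move=> [b [/dset_var [->|->] hcb]] //. apply: ale_trans hcb _. exact: abot_least.
- move=> h. exists (eta x); split => //. apply/dset_var. by right.
Qed.

End Main.


Theorem mainTheorem3 (S : signature) (E : ineqs S) (Delta : tfamily S) (X : Type)
  (Fw : ordAlg S) (etaw : X -> Fw) (F : ordAlg S) (eta : X -> F) :
  quasi_regular Delta -> free_omega E etaw -> free_ord E eta ->
  exists (RA : ordAlg S) (iota : RA -> Fw) (gen : X -> RA),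
    (* RA is R(X) with the order and operations inherited from F_omega(X) *)
    (forall a b, iota a = iota b -> a = b) /\
    (forall a b, ale a b <-> ale (iota a) (iota b)) /\
    iota (abot RA) = abot Fw /\
    (forall f u, iota (aop f u) = aop f (fun i => iota (u i))) /\
    (forall c : Fw, (exists a, iota a = c) <->
                    (exists t, Delta X t /\ ct_eval etaw t c)) /\
    (forall x, iota (gen x) = etaw x) /\
    (* (1) R(X) is a Delta-algebra in V_r, free on X *)
    delta_alg Delta RA /\ sat E RA /\
    (forall B : ordAlg S, delta_alg Delta B -> sat E B -> forall h : X -> B,
       exists g : RA -> B, delta_morph Delta g /\ (forall x, g (gen x) = h x) /\
         (forall g' : RA -> B, delta_morph Delta g' -> (forall x, g' (gen x) = h x) ->
            forall a, g' a = g a)) /\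
    (* (2) R(X) is isomorphic, fixing X, to the completion of F(X) by Delta-ideals *)
    (exists phi : RA -> (F -> Prop),
       (forall a, delta_ideal Delta (phi a)) /\
       (forall C, delta_ideal Delta C -> exists a, forall c, phi a c <-> C c) /\
       (forall a b, ale a b <-> (forall c, phi a c -> phi b c)) /\
       (forall f u c, phi (aop f u) c <->
          exists w, (forall i, phi (u i) (w i)) /\ ale c (aop f w)) /\
       (forall x c, phi (gen x) c <-> ale c (eta x))).
Proof.
move=> HQ Hw HF.
exists (RA HQ Hw), (@iota _ _ _ _ _ _ HQ Hw), (gen HQ Hw).
split; first by move=> a b; exact: RT_inj.
split; first by [].
split; first by [].
split; first by [].
split.
  move=> c; split.
  - move=> [a <-]. exact: (proj2_sig a).
  - move=> [t [ht hc]]. by exists (exist _ c (ex_intro _ t (conj ht hc)) : RA HQ Hw).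
split; first by [].
split; first exact: RA_delta.
split; first exact: RA_sat.
split.
  move=> B HB HBS h. exists (gB HB h); split; first exact: (gB_delta HQ Hw HF HB HBS h).
  split; first exact: (gB_gen HQ Hw HF HB HBS h).
  move=> g' hg' hgx a. exact: (gB_unique HB hg' hgx a).
exists (phi eta (HQ:=HQ) (Hw:=Hw)).
split; first exact: phi_ideal.
split; first exact: (phi_surj HQ Hw HF).
split; first exact: (phi_order HF).
split; first exact: (phi_op HF).
exact: (phi_gen HQ Hw HF).
Qed.
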